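(* Let $(c_1,\dots,c_m)\in\mathbb{Z}^m$ be a quiddity cycle, with indices read cyclically modulo $m$. Then at least one of the following holds: (0) $m<4$ and $(c_1,\dots,c_m)\in\{(0,0),(1,1,1)\}$. (1) There is $k$ with $c_k=1$ such that $(c_1,\dots,c_{k-2},c_{k-1}-1,c_{k+1}-1,c_{k+2},\dots,c_m)$ is a quiddity cycle of length $m-1$. (2) $m$ is odd and there is $k$ with $c_k=0$ such that $(-c_1,\dots,-c_{k-2},-c_{k-1}-c_{k+1},-c_{k+2},\dots,-c_m)$ is a quiddity cycle of length $m-2$. (3) $m$ is even and there is $k$ with $c_k=-1$ such that $(-c_1,\dots,-c_{k-2},-c_{k-1}-1,-c_{k+1}-1,-c_{k+2},\dots,-c_m)$ is a quiddity cycle of length $m-1$. (4) There are $j,k$, not cyclically adjacent, with $c_j=c_k=0$, and the following sequence is a quiddity cycle of length $m-4$: - if $j$ and $k$ are at cyclic distance greater than $2$: $(c_1,\dots,c_{j-2},c_{j-1}+c_{j+1},c_{j+2},\dots,c_{k-2},c_{k-1}+c_{k+1},c_{k+2},\dots,c_m)$; - if (after possibly swapping $j,k$) $j+1=k-1$: $(c_1,\dots,c_{j-2},c_{j-1}+c_{j+1}+c_{k+1},c_{k+2},\dots,c_m)$. (5) There are $j,k$, not cyclically adjacent, with $c_j=c_k=-1$, and the following sequence is a quiddity cycle of length $m-2$: - if $j$ and $k$ are at cyclic distance greater than $2$: $(c_1,\dots,c_{j-2},c_{j-1}+1,c_{j+1}+1,c_{j+2},\dots,c_{k-2},c_{k-1}+1,c_{k+1}+1,c_{k+2},\dots,c_m)$;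 - if (after possibly swapping $j,k$) $j+1=k-1$: $(c_1,\dots,c_{j-2},c_{j-1}+1,c_{j+1}+2,c_{k+1}+1,c_{k+2},\dots,c_m)$.
   Context: $\eta(c)=\begin{pmatrix}c&-1\\1&0\end{pmatrix}$. A quiddity cycle over $\mathbb{Z}$ is $(c_1,\dots,c_m)\in\mathbb{Z}^m$ with $\eta(c_1)\cdots\eta(c_m)=-I$. *)

(* Defs.v *)
From HB Require Import structures.
From mathcomp Require Import all_boot all_order all_algebra.
Set Implicit Arguments. Unset Strict Implicit. Unset Printing Implicit Defensive.
Import Order.TTheory GRing.Theory Num.Theory.
Local Open Scope ring_scope.

Definition eta (c : int) : 'M[int]_2 :=
  \matrix_(i < 2, j < 2)
    (if (i == 0 :> nat) then (if (j == 0 :> nat) then c else -1)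
     else (if (j == 0 :> nat) then 1 else 0)).

Definition quiddity_cycle (s : seq int) : Prop :=
  \prod_(x <- s) eta x = - 1%:M.

(* Main.v *)
Require Import Defs.
From HB Require Import structures.
From mathcomp Require Import all_boot all_order all_algebra.
From mathcomp Require Import ring lra zify.
Import Order.TTheory GRing.Theory Num.Theory.
Local Open Scope ring_scope.

Notation M2 := ('M[int]_2).

Lemma mulE2 (A B : M2) (i j : 'I_2) : (A * B) i j = A i 0 * B 0 j + A i 1 * B 1 j.
Proof. rewrite -mulmxE mxE. rewrite !big_ord_recl big_ord0 addr0. have e0 : (ord0 : 'I_2) = 0 by apply: val_inj. have e1 : (lift ord0 ord0 : 'I_2) = 1 by apply: val_inj. by rewrite e0 e1. Qed.

Lemma eq2 (A B : M2) : A 0 0 = B 0 0 -> A 0 1 = B 0 1 -> A 1 0 = B 1 0 -> A 1 1 = B 1 1 -> A = B.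
Proof.
move=> h00 h01 h10 h11; apply/matrixP => i j.
have [->|->] : i = 0 \/ i = 1 by case: i => [[|[|//]] Hi]; [left|right]; apply: val_inj.
all: have [->|->] : j = 0 \/ j = 1 by case: j => [[|[|//]] Hj]; [left|right]; apply: val_inj.
all: by [].
Qed.

Lemma eta00 (x : int) : Defs.eta x 0 0 = x. Proof. by rewrite !mxE. Qed.
Lemma eta01 (x : int) : Defs.eta x 0 1 = -1. Proof. by rewrite !mxE. Qed.
Lemma eta10 (x : int) : Defs.eta x 1 0 = 1. Proof. by rewrite !mxE. Qed.
Lemma eta11 (x : int) : Defs.eta x 1 1 = 0. Proof. by rewrite !mxE. Qed.
Lemma id00 : (1%:M : M2) 0 0 = 1. Proof. by rewrite !mxE. Qed.
Lemma id01 : (1%:M : M2) 0 1 = 0. Proof. by rewrite !mxE. Qed.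
Lemma id10 : (1%:M : M2) 1 0 = 0. Proof. by rewrite !mxE. Qed.
Lemma id11 : (1%:M : M2) 1 1 = 1. Proof. by rewrite !mxE. Qed.
Lemma opp2 (A : M2) i j : (- A) i j = - A i j. Proof. by rewrite mxE. Qed.

Notation et := Defs.eta.
Lemma one2 : (1 : M2) = 1%:M. Proof. by []. Qed.
Ltac m2 := apply: eq2; rewrite ?mulE2 ?opp2 ?mulE2 ?opp2 ?mulE2 ?opp2 ?eta00 ?eta01 ?eta10 ?eta11 ?id00 ?id01 ?id10 ?id11; ring.

Lemma red1 a b : et a * et 1 * et b = et (a - 1) * et (b - 1).
Proof. m2. Qed.
Lemma red0 a b : et a * et 0 * et b = - et (a + b).
Proof. m2. Qed.
Lemma redm1 a b : et a * et (-1) * et b = - (et (a + 1) * et (b + 1)).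
Proof. m2. Qed.
Definition Dm : M2 := \matrix_(i < 2, j < 2) (if i == j then (if i == 0 then 1 else -1) else 0).
Lemma Dm00 : Dm 0 0 = 1. Proof. by rewrite !mxE. Qed.
Lemma Dm01 : Dm 0 1 = 0. Proof. by rewrite !mxE. Qed.
Lemma Dm10 : Dm 1 0 = 0. Proof. by rewrite !mxE. Qed.
Lemma Dm11 : Dm 1 1 = -1. Proof. by rewrite !mxE. Qed.
Ltac m2' := apply: eq2; rewrite ?mulE2 ?opp2 ?mulE2 ?opp2 ?mulE2 ?opp2 ?eta00 ?eta01 ?eta10 ?eta11 ?id00 ?id01 ?id10 ?id11 ?Dm00 ?Dm01 ?Dm10 ?Dm11; ring.
Lemma etaN x : et (- x) = - (Dm * et x * Dm).
Proof. m2'. Qed.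
Lemma DD : Dm * Dm = 1%:M.
Proof. m2'. Qed.

Definition P (s : seq int) : M2 := \prod_(x <- s) et x.
Lemma P_nil : P [::] = 1%:M. Proof. by rewrite /P big_nil. Qed.
Lemma P_cons x s : P (x :: s) = et x * P s. Proof. by rewrite /P big_cons. Qed.
Lemma P_cat s t : P (s ++ t) = P s * P t. Proof. by rewrite /P big_cat. Qed.
Lemma quidE s : quiddity_cycle s <-> P s = - 1%:M. Proof. by []. Qed.

Lemma swap_neg1 (A B : M2) : A * B = - 1%:M -> B * A = - 1%:M.
Proof.
move=> h. have h' : (- A) *m B = 1%:M by rewrite mulmxE mulNr h opprK.
have := mulmx1C h'. rewrite mulmxE mulrN => /eqP; rewrite eqr_oppLR => /eqP ->. by [].
Qed.

Lemma quid_rot r c : quiddity_cycle c -> quiddity_cycle (rot r c).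
Proof.
rewrite !quidE /rot P_cat => h; apply: swap_neg1; by rewrite -P_cat cat_take_drop.
Qed.

Definition isrot (c d : seq int) := exists r, rot r c = d.
Lemma isrot_refl c : isrot c c. Proof. by exists 0%N; rewrite rot0. Qed.
Lemma isrot_rot1 c d : isrot c d -> isrot c (rot 1 d).
Proof.
case=> r <-. case: (leqP r (size c)) => hr.
  case: (leqP r.+1 (size c)) => h1.
    by exists r.+1; rewrite -add1n rotD.
  have -> : r = size c by lia.
  by rewrite rot_size; exists 1%N.
by rewrite (rot_oversize (ltnW hr)); exists 1%N.
Qed.
Lemma isrot_rot c d k : isrot c d -> isrot c (rot k d).
Proof.
move=> h; elim: k => [|k IH]; first by rewrite rot0.
case: (leqP k.+1 (size d)) => hk.
  by rewrite -add1n rotD //; apply: isrot_rot1.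
by rewrite (rot_oversize (ltnW hk)).
Qed.
Lemma isrot_rotr c d k : isrot c d -> isrot c (rotr k d).
Proof. by move=> h; apply: isrot_rot. Qed.
Lemma isrot_size c d : isrot c d -> size d = size c.
Proof. by case=> r <-; rewrite size_rot. Qed.
Lemma isrot_mem c d x : isrot c d -> (x \in d) = (x \in c).
Proof. by case=> r <-; rewrite mem_rot. Qed.
Lemma isrot_quid c d : isrot c d -> quiddity_cycle c -> quiddity_cycle d.
Proof. by case=> r <-; apply: quid_rot. Qed.
Lemma isrot_trans c d e : isrot c d -> isrot d e -> isrot c e.
Proof. by move=> h [r <-]; apply: isrot_rot. Qed.

Lemma P_neg s : P (map (fun x => - x) s) =
  if odd (size s) then - (Dm * P s * Dm) else Dm * P s * Dm.
Proof.
elim: s => [|x s IH] /=; first by rewrite !P_nil -one2 mulr1 DD.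
rewrite !P_cons IH etaN.
have E : forall A B : M2, (Dm * A * Dm) * (Dm * B * Dm) = Dm * (A * B) * Dm.
  move=> A B. by rewrite -!mulrA (mulrA Dm Dm) DD -one2 mul1r !mulrA.
case: (odd (size s)) => /=.
  by rewrite mulrN mulNr opprK E.
by rewrite mulNr E.
Qed.

Lemma growth (t : seq int) : (forall x, x \in t -> 2 <= `|x|) ->
  (size t)%:Z + 1 <= `|P t 0 0| /\ `|P t 1 0| < `|P t 0 0|.
Proof.
elim: t => [|x t IH] H.
  by rewrite P_nil id00 id10.
have [h1 h2] : (size t)%:Z + 1 <= `|P t 0 0| /\ `|P t 1 0| < `|P t 0 0|.
  by apply: IH => y hy; apply: H; rewrite inE hy orbT.
have hx := H x (mem_head _ _).
rewrite P_cons !mulE2 eta00 eta01 eta10 eta11 /=.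
move: h1 h2 hx; set u := P t 0 0; set w := P t 1 0 => h1 h2 hx.
split; nia.
Qed.

Lemma single_contra (v : int) (t : seq int) : (forall x, x \in t -> 2 <= `|x|) -> ~ quiddity_cycle (v :: t).
Proof.
move=> H; rewrite quidE P_cons => /(congr1 (fun M : M2 => M 1 0)).
rewrite mulE2 opp2 id10 eta10 eta11 => e.
have [h1 _] := growth _ H. lia.
Qed.

Lemma nov_contra (c : seq int) : (forall x, x \in c -> 2 <= `|x|) -> ~ quiddity_cycle c.
Proof.
case: c => [|x t] H.
  by rewrite quidE P_nil => /(congr1 (fun M : M2 => M 0 0)); rewrite opp2 id00.
apply: single_contra => y hy; apply: H; by rewrite inE hy orbT.
Qed.

Lemma adj_contra (v : int) (t : seq int) : v = 0 \/ v = -1 -> (forall x, x \in t -> 2 <= `|x|) -> t != [::] ->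
  ~ quiddity_cycle (v :: v :: t).
Proof.
move=> hv H ht; rewrite quidE !P_cons => e.
have e10 := congr1 (fun M : M2 => M 1 0) e.
have e00 := congr1 (fun M : M2 => M 0 0) e.
move: e10 e00 => /=; rewrite !mulE2 !opp2 id10 id00 !eta00 !eta01 !eta10 !eta11.
have [h1 h2] := growth _ H.
have hs : (1 <= size t)%N by case: t ht {H h1 h2 e}.
move: h1 h2; set u := P t 0 0; set w := P t 1 0 => h1 h2.
case: hv => -> e1 e2; nia.
Qed.

Lemma triple_contra v : v = 0 \/ v = -1 -> ~ quiddity_cycle [:: v; v; v].
Proof.
move=> hv; rewrite quidE !P_cons P_nil => e.
have := congr1 (fun M : M2 => M 1 1) e.
rewrite !mulE2 !opp2 ?id11 ?id01 ?id10 ?id00 !eta00 !eta01 !eta10 !eta11.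
case: hv => ->; lia.
Qed.

Lemma q4 w x y z : quiddity_cycle [:: w; x; y; z] -> x * y = 2.
Proof.
rewrite quidE !P_cons P_nil => e.
have := congr1 (fun M : M2 => M 1 1) e.
rewrite !mulE2 !opp2 ?id11 ?id01 ?id10 ?id00 !eta00 !eta01 !eta10 !eta11.
lia.
Qed.

Lemma getrot0 (x : int) (c : seq int) : x \in c -> exists t, isrot c (x :: t).
Proof.
case/splitPr => s1 s2; exists (s2 ++ s1); exists (size s1); by rewrite rot_size_cat.
Qed.

Lemma getrot3 (x : int) (c : seq int) : x \in c -> (3 <= size c)%N ->
  exists a b s, isrot c [:: a, x, b & s].
Proof.
move=> hx hs; have [t ht] := getrot0 x c hx.
have hst : (2 <= size t)%N by move: hs; rewrite -(isrot_size _ _ ht).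
move: ht hst; case/lastP: t => [//|u a]; case: u => [|b s] //= ht _.
exists a, b, s. have := isrot_rotr _ _ 1 ht. by rewrite -!rcons_cons rotr1_rcons.
Qed.

Definition patA (v : int) c := exists a b d e s1 s2, isrot c ([:: a, v, b & s1] ++ [:: d, v, e & s2]).
Definition patB (v : int) c := exists a b e s, isrot c [:: a, v, b, v, e & s].
Definition pat v c := patA v c \/ patB v c.

Lemma pat_trans v c d : isrot c d -> pat v d -> pat v c.
Proof.
move=> h [[a [b [d0 [e [s1 [s2 h']]]]]]|[a [b [e [s h']]]]].
  by left; exists a, b, d0, e, s1, s2; apply: isrot_trans _ _ _ h h'.
by right; exists a, b, e, s; apply: isrot_trans _ _ _ h h'.
Qed.

Lemma two_occ (v : int) t1 t2 : t1 != [::] -> t2 != [::] -> (size t1 + size t2 != 2)%N ->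
  pat v (v :: t1 ++ v :: t2).
Proof.
case: t1 => [//|b t1] _; case: t2 => [//|e t2] _ /=.
case/lastP: t1 => [|s1 d0]; case/lastP: t2 => [|s2 a] //= hs.
-
  right; exists a, b, e, s2.
  have := isrot_rotr _ _ 1 (isrot_refl [:: v, b, v, e & rcons s2 a]).
  by rewrite -!rcons_cons rotr1_rcons.
-
  right; exists d0, e, b, s1.
  have := isrot_rot _ _ (size (v :: b :: s1)) (isrot_refl (v :: b :: rcons s1 d0 ++ [:: v; e])).
  by rewrite -cats1 -catA -[v :: b :: s1 ++ _]/((v :: b :: s1) ++ _) rot_size_cat.
- left; exists a, b, d0, e, s1, s2.
  have := isrot_rotr _ _ 1 (isrot_refl (v :: b :: rcons s1 d0 ++ v :: e :: rcons s2 a)).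
  have -> : v :: b :: rcons s1 d0 ++ v :: e :: rcons s2 a = rcons (v :: b :: s1 ++ d0 :: v :: e :: s2) a.
    by rewrite -!cats1 /= -!catA.
  by rewrite rotr1_rcons.
Qed.

Lemma key (v : int) (c : seq int) :
  v = 0 \/ v = -1 -> quiddity_cycle c ->
  (forall x, x \in c -> x != v -> 2 <= `|x|) ->
  (3 <= size c)%N -> size c != 4%N -> pat v c.
Proof.
move=> hv0 hq H h3 h4.
have Lof : forall d u : seq int, isrot c d -> (forall x, x \in u -> x \in d) -> v \notin u ->
    forall x, x \in u -> 2 <= `|x|.
  move=> d u hd hud hvu x hx; apply: H; first by rewrite -(isrot_mem _ _ x hd) hud.
  by apply: contraNneq hvu => <-.
case: (boolP (v \in c)) => hv; last first.
  exfalso; apply: (nov_contra c _ hq) => x hx; apply: H => //.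
  by apply: contraNneq hv => <-.
have A : forall u, isrot c (v :: v :: u) -> pat v c.
  move=> u hu; have hsu := isrot_size _ _ hu.
  case: (boolP (v \in u)) => hvu; last first.
    exfalso; apply: (adj_contra _ _ hv0 _ _ (isrot_quid _ _ hu hq)).
      apply: (Lof _ u hu) => // x hx; by rewrite !inE hx !orbT.
    by case: u hu hsu {hvu} => //= hu hsu; move: h3; rewrite -hsu.
  move: hu hsu; case/splitPr: hvu => u1 u2 hu hsu.
  case: u2 hu hsu => [|e u2] hu hsu.
    have hu' := isrot_rot _ _ 1 hu.
    rewrite rot1_cons -cats1 /= -catA /= in hu'.
    case: u1 hu hu' hsu => [|b u1] hu hu' hsu.
      by exfalso; apply: (triple_contra _ hv0 (isrot_quid _ _ hu hq)).
    apply: (pat_trans _ _ _ hu').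
    apply: two_occ => //; move: h4; rewrite -hsu /= size_cat /=.
    by apply: contra => /eqP h; apply/eqP; lia.
  apply: (pat_trans _ _ _ hu); rewrite -[_ :: _ :: _]/(v :: (v :: u1) ++ v :: e :: u2).
  apply: two_occ => //; move: h4; rewrite -hsu /= size_cat /=.
  by apply: contra => /eqP h; apply/eqP; lia.
have [t ht] := getrot0 v c hv.
have hst := isrot_size _ _ ht.
case: (boolP (v \in t)) => hvt; last first.
  exfalso; apply: (single_contra _ _ (Lof _ t ht _ hvt) (isrot_quid _ _ ht hq)).
  by move=> x hx; rewrite inE hx orbT.
move: ht hst; case/splitPr: hvt => t1 t2 ht hst.
case: t1 ht hst => [|b t1] ht hst; first by apply: (A t2).
case/lastP: t2 ht hst => [|t2 a] ht hst.
  apply: (A (b :: t1)); have := isrot_rotr _ _ 1 ht.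
  by rewrite cats1 -rcons_cons rotr1_rcons.
apply: (pat_trans _ _ _ ht); apply: two_occ => //.
  by case: t2 {ht hst}.
move: h4; rewrite -hst /= size_cat /= size_rcons.
by apply: contra => /eqP h; apply/eqP; lia.
Qed.

Lemma P2 x y s : P [:: x, y & s] = et x * et y * P s.
Proof. by rewrite !P_cons !mulrA. Qed.
Lemma P3 x y z s : P [:: x, y, z & s] = et x * et y * et z * P s.
Proof. by rewrite !P_cons !mulrA. Qed.
Lemma P5 x y z u w s : P [:: x, y, z, u, w & s] = et x * et y * et z * et u * et w * P s.
Proof. by rewrite !P_cons !mulrA. Qed.
Lemma redm1B a b e : et a * et (-1) * et b * et (-1) * et e = et (a + 1) * et (b + 2) * et (e + 1).
Proof. m2. Qed.
Lemma red0B a b e : et a * et 0 * et b * et 0 * et e = et (a + b + e).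
Proof. m2. Qed.
Lemma conjD (A B : M2) : (Dm * A * Dm) * (Dm * B * Dm) = Dm * (A * B) * Dm.
Proof. by rewrite -!mulrA (mulrA Dm Dm) DD -one2 mul1r !mulrA. Qed.
Lemma D1D : Dm * 1%:M * Dm = 1%:M.
Proof. by rewrite -one2 mulr1 DD. Qed.

Lemma small (c : seq int) : quiddity_cycle c -> (size c < 3)%N -> c = [:: 0; 0].
Proof.
case: c => [|x [|y [|z t]]] //; rewrite quidE ?P_cons P_nil => e _.
- by have := congr1 (fun M : M2 => M 0 0) e; rewrite opp2 id00.
- by have := congr1 (fun M : M2 => M 1 0) e; rewrite /= mulE2 opp2 ?id10 ?id00 ?eta10 ?eta11.
- have e1 := congr1 (fun M : M2 => M 0 1) e.
  have e2 := congr1 (fun M : M2 => M 1 0) e.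
  move: e1 e2 => /=; rewrite !mulE2 !opp2 ?id01 ?id10 ?id00 ?id11 !eta00 !eta01 !eta10 !eta11 => e1 e2.
  have -> : x = 0 by lia. have -> : y = 0 by lia. by [].
Qed.

Theorem theorem6p4 (c : seq int) :
  quiddity_cycle c ->
  (* (0) *)
  ((size c < 4)%N /\ (c = [:: 0; 0] \/ c = [:: 1; 1; 1]))
  \/
  (* (1) c_k = 1, neighbours a = c_{k-1}, b = c_{k+1} *)
  (exists (r : nat) (a b : int) (s : seq int),
     rot r c = [:: a, 1, b & s] /\
     quiddity_cycle [:: a - 1, b - 1 & s])
  \/
  (* (2) m odd, c_k = 0 *)
  (odd (size c) /\
   exists (r : nat) (a b : int) (s : seq int),
     rot r c = [:: a, 0, b & s] /\
     quiddity_cycle (- a - b :: map (fun x => - x) s))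
  \/
  (* (3) m even, c_k = -1 *)
  (~~ odd (size c) /\
   exists (r : nat) (a b : int) (s : seq int),
     rot r c = [:: a, -1, b & s] /\
     quiddity_cycle [:: - a - 1, - b - 1 & map (fun x => - x) s])
  \/
  (* (4) c_j = c_k = 0, j,k not cyclically adjacent *)
  ((exists (r : nat) (a b d e : int) (s1 s2 : seq int),
      rot r c = [:: a, 0, b & s1] ++ [:: d, 0, e & s2] /\
      quiddity_cycle ((a + b :: s1) ++ (d + e :: s2)))
   \/
   (exists (r : nat) (a b e : int) (s : seq int),
      rot r c = [:: a, 0, b, 0, e & s] /\
      quiddity_cycle (a + b + e :: s)))
  \/
  (* (5) c_j = c_k = -1, j,k not cyclically adjacent *)
  ((exists (r : nat) (a b d e : int) (s1 s2 : seq int),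
      rot r c = [:: a, -1, b & s1] ++ [:: d, -1, e & s2] /\
      quiddity_cycle ([:: a + 1, b + 1 & s1] ++ [:: d + 1, e + 1 & s2]))
   \/
   (exists (r : nat) (a b e : int) (s : seq int),
      rot r c = [:: a, -1, b, -1, e & s] /\
      quiddity_cycle [:: a + 1, b + 2, e + 1 & s])).

Proof.
move=> hq.
case: (ltnP (size c) 3) => h3.
  by left; split; [lia| left; apply: small].
case: (boolP (1 \in c)) => h1.
  right; left.
  have [a [b [s [r hr]]]] := getrot3 1 c h1 h3.
  exists r, a, b, s; split => //.
  have := quid_rot r _ hq; rewrite hr !quidE P3 red1 => <-.
  by rewrite P2.
have hsz : size c = (size c).
  by [].
case: (boolP (odd (size c) && (0 \in c))) => h0.
  case/andP: h0 => hodd h0.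
  right; right; left; split => //.
  have [a [b [s [r hr]]]] := getrot3 0 c h0 h3.
  exists r, a, b, s; split => //.
  have hs : size c = (size s + 3)%N by rewrite -(size_rot r) hr /= addn3.
  have := quid_rot r _ hq; rewrite hr !quidE P3 red0 mulNr => /eqP; rewrite eqr_opp => /eqP e.
  rewrite P_cons (_ : - a - b = - (a + b)); last by rewrite opprD.
  rewrite etaN P_neg.
  have -> : odd (size s) = false by move: hodd; rewrite hs addn3 /=; case: (odd _).
  by rewrite mulNr conjD e D1D.
case: (boolP (~~ odd (size c) && (-1 \in c))) => hm.
  case/andP: hm => hev hm.
  right; right; right; left; split => //.
  have [a [b [s [r hr]]]] := getrot3 (-1) c hm h3.
  exists r, a, b, s; split => //.
  have hs : size c = (size s + 3)%N by rewrite -(size_rot r) hr /= addn3.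
  have := quid_rot r _ hq; rewrite hr !quidE P3 redm1 mulNr => /eqP; rewrite eqr_opp => /eqP e.
  rewrite P2 (_ : - a - 1 = - (a + 1)); last by rewrite opprD.
  rewrite (_ : - b - 1 = - (b + 1)); last by rewrite opprD.
  rewrite !etaN P_neg.
  have -> : odd (size s) = true by move: hev; rewrite hs addn3 /=; case: (odd _).
  by rewrite mulrNN mulrN conjD conjD e D1D.
have h4 : size c != 4%N.
  apply/negP => /eqP h4; clear hsz.
  case: c hq h1 hm h0 h3 h4 => [|w [|x [|y [|z [|? ?]]]]] //= hq h1 hm _ _ _.
  have e := q4 _ _ _ _ hq.
  have : x = 1 \/ x = -1 \/ y = 1 \/ y = -1 by nia.
  by case=> [E|[E|[E|E]]]; move: h1 hm; rewrite E !inE eqxx ?orbT.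
do 4 right.
case: (boolP (odd (size c))) => hodd.
  right.
  have HL : forall x, x \in c -> x != -1 -> 2 <= `|x|.
    move=> x hx hx1.
    have x1 : x != 1 by apply: contraNneq h1 => <-.
    have x0 : x != 0 by move: h0; rewrite hodd /=; apply: contraNneq => <-.
    move: hx1 x1 x0 => /eqP ? /eqP ? /eqP ?; lia.
  have := key (-1) c (or_intror erefl) hq HL h3 h4.
  - case=> [[a [b [d [e [s1 [s2 [r hr]]]]]]]|[a [b [e [s [r hr]]]]]].
      left; exists r, a, b, d, e, s1, s2; split => //.
      have := quid_rot r _ hq; rewrite hr !quidE !P_cat !P3 !redm1 !mulNr !mulrN opprK => <-.
      by rewrite !P2.
    right; exists r, a, b, e, s; split => //.
    have := quid_rot r _ hq; rewrite hr !quidE P5 redm1B => <-.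
    by rewrite P3.
left.
have HL : forall x, x \in c -> x != 0 -> 2 <= `|x|.
  move=> x hx hx0.
  have x1 : x != 1 by apply: contraNneq h1 => <-.
  have x2 : x != -1 by move: hm; rewrite hodd /=; apply: contraNneq => <-.
  move: hx0 x1 x2 => /eqP ? /eqP ? /eqP ?; lia.
have := key 0 c (or_introl erefl) hq HL h3 h4.
- case=> [[a [b [d [e [s1 [s2 [r hr]]]]]]]|[a [b [e [s [r hr]]]]]].
    left; exists r, a, b, d, e, s1, s2; split => //.
    have := quid_rot r _ hq; rewrite hr !quidE !P_cat !P3 !red0 !mulNr !mulrN opprK => <-.
    by rewrite !P_cons.
  right; exists r, a, b, e, s; split => //.
  have := quid_rot r _ hq; rewrite hr !quidE P5 red0B => <-.
  by rewrite P_cons.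
Qed.
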